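(* Let $\alpha\in(0,1)$, let $A\subset\mathbb R$ be bounded, and let $f:A\to\mathbb R$ be uniformly continuous with $V_\alpha(f,A)<\infty$. Then $\lambda(\overline{f(A)})=0$.
   Context: $\lambda$ denotes Lebesgue measure on $\mathbb R$. $V_\alpha(f,A)$ is the supremum of $\sum_{i=1}^m|f(b_i)-f(a_i)|^\alpha$ over all finite collections of non-overlapping intervals $[a_i,b_i]$ with $a_i,b_i\in A$. *)

(* Defs.v *)
From HB Require Import structures.
From mathcomp Require Import all_boot all_order all_algebra.
From mathcomp Require Import all_classical all_reals all_analysis.
Set Implicit Arguments. Unset Strict Implicit. Unset Printing Implicit Defensive.
Import Order.TTheory GRing.Theory Num.Theory.
Import numFieldNormedType.Exports.
Local Open Scope classical_set_scope.
Local Open Scope ring_scope.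

Definition nonoverlapping_in {R : realType} (A : set R) (m : nat)
  (a b : 'I_m -> R) : Prop :=
  (forall i, A (a i) /\ A (b i) /\ a i <= b i) /\
  (forall i j, i != j -> b i <= a j \/ b j <= a i).

Definition Valpha {R : realType} (alpha : R) (f : R -> R) (A : set R) : \bar R :=
  ereal_sup [set x : \bar R | exists (m : nat) (a b : 'I_m -> R),
     nonoverlapping_in A a b /\
     x = (\sum_(i < m) (`|f (b i) - f (a i)| `^ alpha))%:E].

Definition unif_cont_on {R : realType} (f : R -> R) (A : set R) : Prop :=
  forall e : R, 0 < e -> exists2 d : R, 0 < d &
    forall x y, A x -> A y -> `|x - y| < d -> `|f x - f y| < e.

Definition bounded_R {R : realType} (A : set R) : Prop :=
  exists M : R, forall x, A x -> `|x| <= M.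

(* Main.v *)
Require Import Defs.
From HB Require Import structures.
From mathcomp Require Import all_boot all_order all_algebra.
From mathcomp Require Import all_classical all_reals all_analysis.
From mathcomp Require Import ring lra.
Import Order.TTheory GRing.Theory Num.Theory.
Import numFieldNormedType.Exports.
Local Open Scope classical_set_scope.
Local Open Scope ring_scope.

Lemma truncn_mono (R : realType) (x y : R) : 0 <= x -> x <= y ->
  (Num.truncn x <= Num.truncn y)%N.
Proof.
move=> x0 xy; rewrite truncn_ge_nat ?(le_trans x0 xy)//.
by apply: le_trans xy; rewrite truncn_le.
Qed.

Lemma eqle (R : realType) (x y : R) : x = y -> x <= y.
Proof. by move->. Qed.

Lemma leb_itv (R : realType) (x r : R) (I : set R) :
  I = [set` `[x - r, x + r]] -> 0 <= r ->
  ((@lebesgue_measure R) I <= (2 * r)%:E)%E.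
Proof.
move=> -> r0; rewrite lebesgue_measure_itv /=; case: ifP => _.
  by rewrite -EFinB lee_fin; apply/eqle; ring.
by rewrite lee_fin mulr_ge0.
Qed.

Theorem lemma2p2 (R : realType) (alpha : R) (A : set R) (f : R -> R) :
  0 < alpha < 1 ->
  bounded_R A ->
  unif_cont_on f A ->
  (Valpha alpha f A < +oo)%E ->
  (@lebesgue_measure R) (closure (f @` A)) = 0%E.
Proof.
move=> /andP[a0 a1] [M hM] huc hV.
set C := closure (f @` A).
have mC : measurable C by apply: measurable_realfun.closed_measurable; exact: closed_closure.
have V0 : (0 <= Valpha alpha f A)%E.
  apply: ereal_sup_ubound; exists 0%N, (fun _ => 0), (fun _ => 0).
  by split; [split; case | rewrite big_ord0].
set V := fine (Valpha alpha f A).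
have VE : Valpha alpha f A = V%:E by rewrite /V fineK // ge0_fin_numE.
have V_ge0 : 0 <= V by rewrite -lee_fin -VE.
have Vub : forall m (a b : 'I_m -> R), nonoverlapping_in A a b ->
    \sum_(i < m) `|f (b i) - f (a i)| `^ alpha <= V.
  move=> m a b h; rewrite -lee_fin -VE; apply: ereal_sup_ubound.
  by exists m, a, b.
have key : forall eta, 0 < eta ->
    (lebesgue_measure C <= (4 * eta `^ (1 - alpha) * V)%:E)%E.
  move=> eta eta0.
  have [d d0 hd] := huc eta eta0.
  have AM : forall x, A x -> 0 <= (x + M) / d.
    move=> x Ax; apply: divr_ge0; last exact: ltW.
    have := hM x Ax; rewrite ler_norml; lra.
  pose p x := Num.truncn ((x + M) / d).
  pose K := (Num.truncn (2 * M / d)).+1.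
  pose Ak (k : nat) := [set x | A x /\ p x = k].
  have pK : forall x, A x -> (p x < K)%N.
    move=> x Ax; rewrite ltnS; apply: truncn_mono; first exact: AM.
    rewrite ler_pM2r ?invr_gt0 //.
    have := hM x Ax; rewrite ler_norml; lra.
  have close : forall k x z, Ak k x -> Ak k z -> `|f x - f z| < eta.
    move=> k x z [Ax px] [Az pz]; apply: hd => //.
    have := truncn_itv (AM x Ax); have := truncn_itv (AM z Az).
    rewrite -/(p x) -/(p z) px pz => /andP[h1 h2] /andP[h3 h4].
    set X := (x + M) / d in h3 h4 *; set Z := (z + M) / d in h1 h2 *.
    have -> : x - z = d * (X - Z).
      by rewrite /X /Z mulrBr !(mulrC d) !mulfVK ?gt_eqF //; ring.
    rewrite normrM gtr0_norm // -ltr_pdivlMl // mulVf ?gt_eqF //.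
    rewrite ltr_norml; lra.
  have order : forall k k' x z, Ak k x -> Ak k' z -> (k < k')%N -> x < z.
    move=> k k' x z [Ax px] [Az pz] kk; rewrite ltNge; apply/negP => zx.
    have : (p z <= p x)%N.
      apply: truncn_mono; first exact: AM.
      by rewrite ler_pM2r ?invr_gt0 //; lra.
    by rewrite px pz leqNgt kk.
  pose c k := xget 0 (Ak k).
  have cA : forall k, Ak k !=set0 -> Ak k (c k) by move=> k; exact: xgetPex.
  pose Sk k := [set `|f y - f (c k)| | y in Ak k].
  pose D k := sup (Sk k).
  have hsup : forall k, Ak k !=set0 -> has_sup (Sk k).
    move=> k ne; split; first by exists `|f (c k) - f (c k)|, (c k); [exact: cA|].
    exists eta => _ [y hy <-]; apply: ltW; apply: close hy (cA k ne).
  have Dub : forall k y, Ak k y -> `|f y - f (c k)| <= D k.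
    move=> k y hy; apply: sup_upper_bound; [apply: hsup; by exists y|by exists y].
  have Dle : forall k, Ak k !=set0 -> D k <= eta.
    move=> k ne; apply: ge_sup; first by case: (hsup k ne).
    move=> _ [y hy <-]; apply: ltW; apply: close hy (cA k ne).
  have D0 : forall k, Ak k !=set0 -> 0 <= D k.
    by move=> k ne; apply: le_trans (Dub k _ (cA k ne)).
  pose Y k := xget 0 [set y | Ak k y /\ D k <= 2 * `|f y - f (c k)|].
  have hY : forall k, Ak k !=set0 ->
      Ak k (Y k) /\ D k <= 2 * `|f (Y k) - f (c k)|.
    move=> k ne.
    suff : [set y | Ak k y /\ D k <= 2 * `|f y - f (c k)|] (Y k) by [].
    apply: xgetPex.
    have [HD|HD] := leP (D k) 0.
      exists (c k); split; first exact: cA.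
      by apply: (le_trans HD); rewrite mulr_ge0.
    have [_ [y hy <-] he] := sup_adherent (divr_gt0 HD (ltr0Sn R 1)) (hsup k ne).
    exists y; split => //; rewrite -/(D k) in he; lra.
  pose e k := `|f (Y k) - f (c k)|.
  have ele : forall k, Ak k !=set0 -> e k <= eta.
    move=> k ne; apply: ltW; apply: close (hY k ne).1 (cA k ne).
  have bnd : forall k, Ak k !=set0 ->
      2 * D k <= 4 * eta `^ (1 - alpha) * e k `^ alpha.
    move=> k ne; have [_ h] := hY k ne.
    have e0 : 0 <= e k by exact: normr_ge0.
    have -> : 4 * eta `^ (1 - alpha) * e k `^ alpha =
        4 * (e k `^ alpha * eta `^ (1 - alpha)) by ring.
    apply: (@le_trans _ _ (4 * e k)); first by rewrite -/(e k) in h; lra.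
    rewrite ler_pM2l //.
    rewrite -{1}(powRr1 e0) -{1}(subrKC alpha 1) powRD; last first.
      by rewrite subrKC oner_eq0.
    apply: ler_wpM2l; first exact: powR_ge0.
    apply: ge0_ler_powR; [lra | by rewrite nnegrE | by rewrite nnegrE ltW | exact: ele].
  pose S := [set k : 'I_K | `[< Ak k !=set0 >]].
  have kS : forall i : 'I_#|S|, Ak (enum_val i) !=set0.
    by move=> i; have := enum_valP i; rewrite inE => /asboolP.
  pose a (i : 'I_#|S|) := Order.min (c (enum_val i)) (Y (enum_val i)).
  pose b (i : 'I_#|S|) := Order.max (c (enum_val i)) (Y (enum_val i)).
  have nov : nonoverlapping_in A a b.
    split.
      move=> i; have [[AY _] _] := hY _ (kS i); have [Ac _] := cA _ (kS i).
      rewrite /a /b; have [h|h] := leP (c (enum_val i)) (Y (enum_val i)).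
        by [].
      by split => //; split => //; apply: ltW.
    move=> i j ij.
    have kij : enum_val i != enum_val j.
      by apply: contra ij => /eqP/enum_val_inj ->.
    have ord2 : forall k k' : 'I_K, Ak k !=set0 -> Ak k' !=set0 -> (k < k')%N ->
        Order.max (c k) (Y k) <= Order.min (c k') (Y k').
      move=> k k' ne ne' kk.
      have h1 := cA k ne; have h2 := (hY k ne).1.
      have h3 := cA k' ne'; have h4 := (hY k' ne').1.
      by rewrite ge_max !le_min !ltW ?(order _ _ _ _ h1 h3) ?(order _ _ _ _ h1 h4)
        ?(order _ _ _ _ h2 h3) ?(order _ _ _ _ h2 h4).
    have [lt|gt|eq] := ltngtP (enum_val i) (enum_val j).
    - by left; apply: ord2.
    - by right; apply: ord2.
    - by move: kij; rewrite (val_inj eq) eqxx.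
  have sumS : \sum_(k in S) e k `^ alpha <= V.
    rewrite big_enum_val; apply: le_trans (Vub _ a b nov).
    apply/eqle/eq_bigr => i _; rewrite /a /b /e.
    have [h|h] := leP (c (enum_val i)) (Y (enum_val i)).
      by [].
    by rewrite distrC.
  pose F (k : nat) := if `[< Ak k !=set0 >] then
     [set` `[f (c k) - D k, f (c k) + D k]] else set0.
  have cl : closed (\big[setU/set0]_(k < K) F k).
    apply: closed_bigsetU => k _; rewrite /F.
    by case: asboolP => _; [exact: itv_closed | exact: closed0].
  have sub : f @` A `<=` \big[setU/set0]_(k < K) F k.
    move=> _ [x Ax <-]; rewrite -bigcup_mkord; exists (p x); first exact: pK.
    rewrite /F; case: asboolP => [_ | []]; last by exists x.
    have := Dub (p x) x (conj Ax erefl); rewrite /= in_itv /= ler_norml => /andP[h1 h2].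
    apply/andP; split; lra.
  have cover : C `<=` \big[setU/set0]_(k < K) F k.
    by have := closureS sub; rewrite -(proj1 (closure_id _) cl).
  have mF : forall k, `I_K k -> measurable (F k).
    by move=> k _; rewrite /F; case: asboolP => _; [exact: measurable_itv | exact: measurable0].
  apply: le_trans (content_subadditive (@lebesgue_measure R) mF mC cover) _.
  apply: (@le_trans _ _ (\sum_(k < K) (if `[< Ak k !=set0 >] then 2 * D k else 0)%:E)).
    apply: lee_sum => k _; rewrite /F; case: asboolP => ne; last by rewrite measure0.
    by apply: leb_itv => //; apply: D0.
  rewrite sumEFin lee_fin -big_mkcond /=.
  have -> : \sum_(k < K | `[< Ak k !=set0 >]) 2 * D k = \sum_(k in S) 2 * D k.
    by apply: eq_bigl => k; apply/idP/idP => [h|/set_mem //]; exact: mem_set.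
  apply: (@le_trans _ _ (\sum_(k in S) 4 * eta `^ (1 - alpha) * e k `^ alpha)).
    by apply: ler_sum => k /set_mem /asboolP; apply: bnd.
  rewrite -mulr_sumr; apply: ler_wpM2l => //.
  by rewrite mulr_ge0 // powR_ge0.
apply/eqP; rewrite -measure_le0; apply/lee_addgt0Pr => e e0.
have V1 : 0 < 4 * V + 1 by rewrite ltr_pwDr // mulr_ge0.
pose t := e / (4 * V + 1).
have t0 : 0 < t by rewrite divr_gt0.
have := key (t `^ (1 - alpha)^-1) (powR_gt0 _ t0).
rewrite -powRrM mulVf ?powRr1 ?(ltW t0); last by rewrite subr_eq0 gt_eqF.
move/le_trans; apply; rewrite add0e lee_fin.
have te : t * (4 * V + 1) = e by rewrite /t mulfVK // gt_eqF.
nra.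
all: by [].
Qed.
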